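(* Let $P$ be a connected shrub on a finite set $I$ with at least two elements, and let $a\neq a'$ be two vertices of height $0$ in $P$. Then there exists a vertex $b$ covering both $a$ and $a'$.
   Context: A shrub $P$ on a finite set $I$ is a set $E$ of edges (unordered pairs $\{i,j\}$ of distinct elements of $I$) together with a height function $h_P:I\to\mathbb{N}$. Say that $j$ covers $i$ if $\{i,j\}\in E$ and $h_P(j)=h_P(i)+1$. The axioms are: (1) if $\{i,j\}\in E$ then $h_P(i)=h_P(j)\pm 1$; (2) if $h_P(j)>0$ then there is an edge $\{i,j\}$ with $h_P(i)=h_P(j)-1$; (3) there are no four distinct vertices $a,b,c,d$ such that $a$ covers $b$ and $c$, $c$ covers $d$, and $\{b,d\}\notin E$; (4) there are no five distinct vertices $a,b,c,d,e$ such that $a$ covers $c$ and $d$, $b$ covers $d$ and $e$, $\{a,e\}\notin E$ and $\{b,c\}\notin E$. A shrub is connected if its underlying graph $(I,E)$ is connected. *)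

(* Defs.v *)
From mathcomp Require Import all_boot.
Set Implicit Arguments. Unset Strict Implicit. Unset Printing Implicit Defensive.

(* A shrub on a finite set I: an edge set given as a relation E : rel I that is
   symmetric and irreflexive (unordered pairs of distinct elements), together
   with a height function h : I -> nat. *)

Definition covers (I : finType) (E : rel I) (h : I -> nat) (j i : I) : bool :=
  E i j && (h j == (h i).+1).

Definition is_shrub (I : finType) (E : rel I) (h : I -> nat) : Prop :=
  (forall i j, E i j = E j i) /\
  (forall i, ~~ E i i) /\
  (forall i j, E i j -> h i = (h j).+1 \/ h j = (h i).+1) /\
  (forall j, 0 < h j -> exists i, E i j /\ (h i).+1 = h j) /\
  (forall a b c d : I, uniq [:: a; b; c; d] ->
     covers E h a b -> covers E h a c -> covers E h c d -> E b d) /\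
  (forall a b c d e : I, uniq [:: a; b; c; d; e] ->
     covers E h a c -> covers E h a d -> covers E h b d -> covers E h b e ->
     E a e \/ E b c).

Definition shrub_connected (I : finType) (E : rel I) : Prop :=
  forall x y : I, connect E x y.

(* Main.v *)
Require Import Defs.
From mathcomp Require Import all_boot.

Ltac split_ands :=
  repeat match goal with H : is_true (_ && _) |- _ => move/andP: H => [? ?] end.

Ltac solve_uniq Hu :=
  move: Hu; rewrite /= ?inE ?negb_or => Hu; split_ands;
  rewrite /= ?inE ?negb_or;
  repeat (apply/andP; split); try done; try (by rewrite eq_sym).

Definition Sh (I : finType) (E : rel I) (x : I) (p : seq I) :=
  exists q, path E x q /\ last x q = last x p /\ size q < size p.

Arguments Sh {I}.

Lemma Sh_cons (I : finType) (E : rel I) u v p :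
  E u v -> Sh E v p -> Sh E u (v :: p).
Proof.
move=> Euv [q [Pq [Lq Sq]]]; exists (v :: q); split; first by rewrite /= Euv.
by split.
Qed.

Lemma upup (I : finType) (E : rel I) (h : I -> nat) :
  is_shrub E h -> forall r u v w,
  path E u (v :: w :: r) -> uniq (u :: v :: w :: r) ->
  covers E h w v -> covers E h v u -> h (last u (v :: w :: r)) < h w ->
  Sh E u (v :: w :: r).
Proof.
move=> [Hsym [Hirr [H1 [H2 [H3 H4]]]]].
elim=> [|x r IH] u v w /=.
  by move=> _ _ _ _; rewrite ltnn.
move=> Hp Hu Cwv Cvu Hl.
have Ewx : E w x by move: Hp => /and4P [].
case: (H1 _ _ Ewx) => hwx.
- have Exu : E x u.
    apply: (H3 w x v u) => //.
    + solve_uniq Hu.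
    + by rewrite /covers (Hsym x w) Ewx hwx eqxx.
  exists (x :: r); split; first by move: Hp => /and4P [_ _ _ Hr]; rewrite /= (Hsym u x) Exu Hr.
  by split.
- apply: Sh_cons; first by move: Hp => /andP [].
  apply: IH.
  + by move: Hp => /andP [].
  + by move: Hu => /andP [].
  + by rewrite /covers Ewx hwx eqxx.
  + by [].
  + by rewrite /=; apply: (ltn_trans Hl); rewrite hwx.
Qed.

Lemma main_ind (I : finType) (E : rel I) (h : I -> nat) (a a' : I) :
  is_shrub E h -> a != a' -> h a = 0 -> h a' = 0 -> forall n p,
  size p < n -> path E a p -> last a p = a' ->
  exists b : I, covers E h b a /\ covers E h b a'.
Proof.
move=> Hs; have Hs' := Hs; move: Hs' => [Hsym [Hirr [H1 [H2 [H3 H4]]]]].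
move=> Haa' ha ha'.
have up0 : forall x y, E x y -> h x = 0 -> h y = 1.
  by move=> x y Exy hx; case: (H1 _ _ Exy); rewrite hx.
elim=> [|n IH] p //.
move=> Hsz Hp Hl.
move: Hl; case: (shortenP Hp) => p' Hp' Hu Hsub Hl'.
have Hsz' : size p' < n.+1.
  apply: leq_ltn_trans Hsz; apply: uniq_leq_size => //.
  by move: Hu => /andP [].
have useIH : Sh E a p' -> exists b : I, covers E h b a /\ covers E h b a'.
  move=> [q [Pq [Lq Sq]]]; apply: (IH q) => //.
  + by apply: leq_trans Sq _; rewrite -ltnS.
  + by rewrite Lq.
case: p' Hp' Hu Hsub Hl' Hsz' useIH => [|v [|w [|x r]]] Hp' Hu Hsub Hl' Hsz' useIH.
- by move: Haa'; rewrite -Hl' eqxx.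
- move: Hp' => /= /andP [Eav _]; move: Hl' => /= Hv; move: (up0 _ _ Eav ha); by rewrite Hv ha'.
- move: Hp' => /= /and3P [Eav Evw _]; move: Hl' => /= Hw.
  have hv := up0 _ _ Eav ha.
  exists v; rewrite /covers Eav -Hw (Hsym w v) Evw hv ha Hw ha' eqxx; by [].
- move: (Hp') => /= /and4P [Eav Evw Ewx Hr].
  have hv := up0 _ _ Eav ha.
  case: (H1 _ _ Evw); rewrite hv => hw.
  + have hw0 : h w = 0 by case: hw.
    have hx := up0 _ _ Ewx hw0.
    case: r Hp' Hu Hsub Hl' Hsz' useIH Hr => [|y r] Hp' Hu Hsub Hl' Hsz' useIH Hr.
      by move: Hl' => /= Hx; move: hx; rewrite Hx ha'.
    move: Hr => /= /andP [Exy Hr].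
    case: (H1 _ _ Exy); rewrite hx => hy.
    * have hy0 : h y = 0 by case: hy.
      have : E v y \/ E x a.
        apply: (H4 v x a w y).
        - solve_uniq Hu.
        - by rewrite /covers Eav hv ha.
        - by rewrite /covers (Hsym w v) Evw hv hw0.
        - by rewrite /covers Ewx hx hw0.
        - by rewrite /covers (Hsym y x) Exy hx hy0.
      case=> [Evy|Exa]; apply: useIH.
      - by exists [:: v, y & r]; rewrite /= Eav Evy Hr.
      - by exists [:: x, y & r]; rewrite /= Hsym Exa Exy Hr.
    * apply: useIH; apply: Sh_cons => //; apply: Sh_cons => //.
      apply: (@upup _ _ _ Hs r w x y).
      - by rewrite /= Ewx Exy Hr.
      - by move: Hu => /andP [_ /andP [_]].
      - by rewrite /covers Exy hy hx.
      - by rewrite /covers Ewx hx hw0.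
      - by move: Hl' => /= ->; rewrite ha' hy.
  + apply: useIH; apply: (@upup _ _ _ Hs (x :: r) a v w).
    - by [].
    - by [].
    - by rewrite /covers Evw hw hv.
    - by rewrite /covers Eav hv ha.
    - by rewrite Hl' ha' hw.
Qed.

Theorem mainTheorem4 (I : finType) (E : rel I) (h : I -> nat) :
  is_shrub E h -> shrub_connected E -> 1 < #|I| ->
  forall a a' : I, a != a' -> h a = 0 -> h a' = 0 ->
  exists b : I, covers E h b a /\ covers E h b a'.
Proof.
move=> Hs Hc _ a a' Haa' ha ha'.
case/connectP: (Hc a a') => p Hp Hl.
by apply: (@main_ind _ _ _ _ _ Hs Haa' ha ha' _ _ (ltnSn (size p)) Hp (esym Hl)).
Qed.
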